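(* Let $A\in\mathbb{R}^{m\times n}$ satisfy the group restricted isometry property of order $2k$ with constant $\delta_{2k}\in(0,1)$, and let $\|\cdot\|_A$ be a norm on $\mathbb{R}^n$ that is decomposable with respect to $\mathcal{G}$. Let $f>0$ be a constant such that for every $h\in\mathbb{R}^n$, every $\Lambda_0\in\mathrm{GkS}$ and every optimal group $k$-sparse decomposition $\Lambda_1,\ldots,\Lambda_s$ of $h_{\mathcal{N}\setminus\Lambda_0}$ with respect to $\|\cdot\|_A$, $\sum_{j=2}^s\|h_{\Lambda_j}\|_2\le\frac1f\|h_{\mathcal{N}\setminus\Lambda_0}\|_A$. Let $h\in\mathbb{R}^n$, $\Lambda_0\in\mathrm{GkS}$, let $\Lambda_1,\ldots,\Lambda_s$ ($s\ge1$) be an optimal group $k$-sparse decomposition of $h_{\mathcal{N}\setminus\Lambda_0}$ with respect to $\|\cdot\|_A$, and let $\Lambda=\Lambda_0\cup\Lambda_1$. Then $$\|h_\Lambda\|_2\le\frac{\sqrt2\,\delta_{2k}}{f(1-\delta_{2k})}\|h_{\mathcal{N}\setminus\Lambda_0}\|_A+\frac{\sqrt{1+\delta_{2k}}}{1-\delta_{2k}}\|Ah\|_2 .$$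
   Context: Fix positive integers $n,k$, $\mathcal{N}=\{1,\ldots,n\}$, and a partition $\mathcal{G}=\{G_1,\ldots,G_g\}$ of $\mathcal{N}$ with $|G_i|\le k$. For $x\in\mathbb{R}^n$, $\Lambda\subseteq\mathcal{N}$: $(x_\Lambda)_i=x_i$ if $i\in\Lambda$, else $0$; $\mathrm{supp}(u)=\{i:u_i\ne0\}$; $G_S=\bigcup_{i\in S}G_i$. For an integer $t$, $\Lambda$ is group $t$-sparse if $\Lambda=G_S$ for some $S$ and $|\Lambda|\le t$; $\mathrm{GkS}$ is the collection of group $k$-sparse sets. A norm is decomposable w.r.t. $\mathcal{G}$ if $\|u+v\|=\|u\|+\|v\|$ whenever $\mathrm{supp}(u)\subseteq G_{S_u}$, $\mathrm{supp}(v)\subseteq G_{S_v}$ with $S_u\cap S_v=\emptyset$. $A$ satisfies the group restricted isometry property of order $2k$ with constant $\delta_{2k}$ if $(1-\delta_{2k})\|z\|_2^2\le\|Az\|_2^2\le(1+\delta_{2k})\|z\|_2^2$ for every $z$ whose support lies in some group $2k$-sparse set. Optimal group $k$-sparse decomposition of $v=h_{\mathcal{N}\setminus\Lambda_0}$ w.r.t. $\|\cdot\|_A$: pairwise disjoint group $k$-sparse sets $\Lambda_1,\ldots,\Lambda_s\subseteq\mathcal{N}\setminus\Lambda_0$ with union $\mathcal{N}\setminus\Lambda_0$, such that for each $i$, with $r_i=v-\sum_{j<i}v_{\Lambda_j}$, $\Lambda_i$ minimizes $\|r_i-(r_i)_\Lambda\|_A$ over group $k$-sparse $\Lambda\subseteq\mathcal{N}\setminus(\Lambda_0\cup\cdots\cup\Lambda_{i-1})$.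 *)

(* Defs.v *)
From HB Require Import structures.
From mathcomp Require Import all_boot all_order all_algebra.
From mathcomp Require Import reals.
Set Implicit Arguments. Unset Strict Implicit. Unset Printing Implicit Defensive.
Import Order.TTheory GRing.Theory Num.Theory.
Local Open Scope ring_scope.

Definition norm2 (R : realType) (p : nat) (x : 'cV[R]_p) : R :=
  Num.sqrt (\sum_i (x i 0) ^+ 2).

Section Defs.
Variables (R : realType) (n : nat).

Definition restrict (L : {set 'I_n}) (x : 'cV[R]_n) : 'cV[R]_n :=
  \col_i (if i \in L then x i 0 else 0).

Definition supp (u : 'cV[R]_n) : {set 'I_n} := [set i | u i 0 != 0].


Definition group_partition (P : {set {set 'I_n}}) (k : nat) : Prop :=
  partition P [set: 'I_n] /\ forall B, B \in P -> (#|B| <= k)%N.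

Definition group_sparse (P : {set {set 'I_n}}) (t : nat) (L : {set 'I_n}) : Prop :=
  (exists2 S : {set {set 'I_n}}, S \subset P & L = cover S) /\ (#|L| <= t)%N.

Definition is_norm (N : 'cV[R]_n -> R) : Prop :=
  [/\ forall x, 0 <= N x,
      forall x, N x = 0 -> x = 0,
      forall (a : R) x, N (a *: x) = `|a| * N x
    & forall x y, N (x + y) <= N x + N y].

Definition decomposable (P : {set {set 'I_n}}) (N : 'cV[R]_n -> R) : Prop :=
  forall (u v : 'cV[R]_n) (Su Sv : {set {set 'I_n}}),
    Su \subset P -> Sv \subset P -> [disjoint Su & Sv] ->
    supp u \subset cover Su -> supp v \subset cover Sv ->
    N (u + v) = N u + N v.

Definition group_RIP (m : nat) (P : {set {set 'I_n}}) (k : nat)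
    (A : 'M[R]_(m, n)) (d : R) : Prop :=
  forall z : 'cV[R]_n,
    (exists2 L, group_sparse P (2 * k) L & supp z \subset L) ->
    (1 - d) * norm2 z ^+ 2 <= norm2 (A *m z) ^+ 2 /\
    norm2 (A *m z) ^+ 2 <= (1 + d) * norm2 z ^+ 2.

(* Ls = [:: Lambda_1; ...; Lambda_s] is an optimal group k-sparse
   decomposition of v = h_{N \ Lambda_0} w.r.t. N (0-indexed list). *)
Definition optimal_decomposition (P : {set {set 'I_n}}) (k : nat)
    (N : 'cV[R]_n -> R) (h : 'cV[R]_n) (L0 : {set 'I_n})
    (Ls : seq {set 'I_n}) : Prop :=
  let v := restrict (~: L0) h in
  [/\ forall i, (i < size Ls)%N -> group_sparse P k (nth set0 Ls i),
      forall i, (i < size Ls)%N -> nth set0 Ls i \subset ~: L0,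
      forall i j, (i < size Ls)%N -> (j < size Ls)%N -> i != j ->
        [disjoint nth set0 Ls i & nth set0 Ls j],
      \bigcup_(B <- Ls) B = ~: L0
    & forall i, (i < size Ls)%N ->
        let prev := L0 :|: \bigcup_(j < i) nth set0 Ls j in
        let r := v - \sum_(j < i) restrict (nth set0 Ls j) v in
        nth set0 Ls i \subset ~: prev /\
        forall L, group_sparse P k L -> L \subset ~: prev ->
          N (r - restrict (nth set0 Ls i) r) <= N (r - restrict L r)].

End Defs.

(* Main.v *)
Require Import Defs.
From HB Require Import structures.
From mathcomp Require Import all_boot all_order all_algebra.
From mathcomp Require Import reals.
From mathcomp Require Import ring lra.
Set Implicit Arguments. Unset Strict Implicit.
Import Order.TTheory GRing.Theory Num.Theory.
Local Open Scope ring_scope.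

Section Aux.
Variable R : realType.

Definition dot (p : nat) (x y : 'cV[R]_p) : R := \sum_i x i 0 * y i 0.

Lemma dotC p (x y : 'cV[R]_p) : dot x y = dot y x.
Proof. by apply: eq_bigr => i _; rewrite mulrC. Qed.

Lemma dotDr p (x y z : 'cV[R]_p) : dot x (y + z) = dot x y + dot x z.
Proof. by rewrite /dot -big_split; apply: eq_bigr => i _; rewrite mxE mulrDr. Qed.

Lemma dotDl p (x y z : 'cV[R]_p) : dot (y + z) x = dot y x + dot z x.
Proof. by rewrite dotC dotDr !(dotC x). Qed.

Lemma dotZl p c (x y : 'cV[R]_p) : dot (c *: x) y = c * dot x y.
Proof. by rewrite /dot mulr_sumr; apply: eq_bigr => i _; rewrite mxE mulrA. Qed.

Lemma dotNr p (x y : 'cV[R]_p) : dot x (- y) = - dot x y.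
Proof. by rewrite /dot -sumrN; apply: eq_bigr => i _; rewrite mxE mulrN. Qed.

Lemma dot0r p (x : 'cV[R]_p) : dot x 0 = 0.
Proof. by rewrite /dot big1 // => i _; rewrite mxE mulr0. Qed.

Lemma dot_sumr p (x : 'cV[R]_p) I (r : seq I) (F : I -> 'cV[R]_p) :
  dot x (\sum_(i <- r) F i) = \sum_(i <- r) dot x (F i).
Proof. exact: (big_morph (dot x) (dotDr x) (dot0r x)). Qed.

Lemma dot_ge0 p (x : 'cV[R]_p) : 0 <= dot x x.
Proof. by apply: sumr_ge0 => i _; rewrite -expr2 sqr_ge0. Qed.

Lemma norm2_sq p (x : 'cV[R]_p) : norm2 x ^+ 2 = dot x x.
Proof. by rewrite /norm2 sqr_sqrtr //; apply: sumr_ge0 => i _; rewrite sqr_ge0. Qed.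

Lemma norm2_ge0 p (x : 'cV[R]_p) : 0 <= norm2 x.
Proof. exact: sqrtr_ge0. Qed.

Lemma norm2_eq0 p (x : 'cV[R]_p) : norm2 x = 0 -> x = 0.
Proof.
move=> h0; have : dot x x = 0 by rewrite -norm2_sq h0 expr0n.
move=> /psumr_eq0P H; apply/matrixP => i j; rewrite (ord1 j) mxE.
have := H (fun i _ => (sqr_ge0 (x i 0))) i isT.
by move/eqP; rewrite mulf_eq0 orbb => /eqP.
Qed.

Lemma norm2N p (x : 'cV[R]_p) : norm2 (- x) = norm2 x.
Proof. by rewrite /norm2; congr Num.sqrt; apply: eq_bigr => i _; rewrite mxE sqrrN. Qed.

Lemma key (K a b g : R) : 0 <= a -> 0 <= b -> 0 <= K ->
  (a = 0 -> g = 0) -> (b = 0 -> g = 0) ->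
  (forall c, 0 < c -> 2 * c * g <= K * (c ^+ 2 * a ^+ 2 + b ^+ 2)) ->
  g <= K * a * b.
Proof.
move=> a0 b0 K0 ha hb H.
have [a0e|an] := eqVneq a 0.
  by rewrite (ha a0e) a0e mulr0 mul0r.
have [b0e|bn] := eqVneq b 0.
  by rewrite (hb b0e) b0e mulr0.
have ap : 0 < a by rewrite lt_def an.
have bp : 0 < b by rewrite lt_def bn.
have := H (b / a) (divr_gt0 bp ap).
have -> : K * ((b / a) ^+ 2 * a ^+ 2 + b ^+ 2) = 2 * (b / a) * (K * a * b).
  by field; rewrite an.
by rewrite ler_pM2l // mulr_gt0 // divr_gt0.
Qed.

Lemma cauchy p (x y : 'cV[R]_p) : dot x y <= norm2 x * norm2 y.
Proof.
rewrite -[norm2 x]mul1r; apply: key; rewrite ?norm2_ge0 //.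
- by move/norm2_eq0 => ->; rewrite dotC /dot big1 // => i _; rewrite mxE mulr0.
- by move/norm2_eq0 => ->; rewrite dot0r.
move=> c c0; rewrite mul1r !norm2_sq.
have := dot_ge0 (c *: x - y).
rewrite dotDl !dotDr !dotZl (dotNr x y) (dotC (- y) (c *: x)) (dotNr (c *: x) y) (dotNr (- y) y).
rewrite (dotC (- y) y) (dotNr y y) (dotZl c x y) (dotC x (c *: x)) (dotZl c x x) opprK.
move=> h; nra.
Qed.


Lemma dotZr p c (x y : 'cV[R]_p) : dot x (c *: y) = c * dot x y.
Proof. by rewrite dotC dotZl dotC. Qed.

Lemma dot_exp p c s (x y : 'cV[R]_p) :
  dot (c *: x + s *: y) (c *: x + s *: y) =
  c ^+ 2 * dot x x + 2 * c * s * dot x y + s ^+ 2 * dot y y.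
Proof.
rewrite dotDl !dotDr !dotZl !dotZr (dotC y x). ring.
Qed.

Lemma mx0dot p q (B : 'M[R]_(q, p)) y : dot (B *m 0) y = 0.
Proof. by rewrite mulmx0 dotC dot0r. Qed.

Variable n : nat.
Implicit Types (L : {set 'I_n}) (x y : 'cV[R]_n).

Lemma restrictE L x i : restrict L x i 0 = if i \in L then x i 0 else 0.
Proof. by rewrite mxE. Qed.

Lemma dot_restrict_disj L1 L2 x y : [disjoint L1 & L2] ->
  dot (restrict L1 x) (restrict L2 y) = 0.
Proof.
move=> dj; rewrite /dot big1 // => i _; rewrite !restrictE.
case: ifP => h1; last by rewrite mul0r.
by rewrite (disjointFr dj h1) mulr0.
Qed.

Lemma restrictU L1 L2 x : [disjoint L1 & L2] ->
  restrict (L1 :|: L2) x = restrict L1 x + restrict L2 x.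
Proof.
move=> dj; apply/matrixP => i j; rewrite (ord1 j) !mxE inE.
have [h1|h1] := boolP (i \in L1); first by rewrite (disjointFr dj h1) addr0.
by rewrite /=; case: ifP; rewrite add0r.
Qed.

Lemma restrictN L x : restrict L (- x) = - restrict L x.
Proof.
by apply/matrixP => i j; rewrite (ord1 j) !mxE; case: ifP; rewrite ?oppr0.
Qed.

Lemma supp_lin L1 L2 x y c s :
  supp (c *: restrict L1 x + s *: restrict L2 y) \subset L1 :|: L2.
Proof.
apply/subsetP => i; rewrite inE; apply: contraR => /negP hn.
rewrite !mxE; case: ifP => h1; first by case: hn; rewrite inE h1.
case: ifP => h2; first by case: hn; rewrite inE h2 orbT.
by rewrite !mulr0 addr0.
Qed.

Lemma gs_union P k L1 L2 : group_sparse P k L1 -> group_sparse P k L2 ->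
  group_sparse P (2 * k) (L1 :|: L2).
Proof.
move=> [[S1 s1 e1] c1] [[S2 s2 e2] c2]; split.
  exists (S1 :|: S2); first by rewrite subUset s1.
  by rewrite /cover bigcup_setU e1 e2.
apply: leq_trans (leq_card_setU L1 L2).1 _.
by rewrite mul2n -addnn leq_add.
Qed.

Lemma rip_dot m P k (B : 'M[R]_(m, n)) d L1 L2 x y :
  group_RIP P k B d -> 0 <= d -> group_sparse P k L1 -> group_sparse P k L2 ->
  [disjoint L1 & L2] ->
  dot (B *m restrict L1 x) (B *m restrict L2 y)
    <= d * norm2 (restrict L1 x) * norm2 (restrict L2 y).
Proof.
move=> rip d0 g1 g2 dj.
set u := restrict L1 x; set v := restrict L2 y.
apply: key; rewrite ?norm2_ge0 //.
- by move/norm2_eq0 => ->; rewrite mx0dot.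
- by move/norm2_eq0 => ->; rewrite dotC mx0dot.
move=> c c0.
have g12 := gs_union g1 g2.
have [_ hp] := rip (c *: u + 1 *: v) (ex_intro2 _ _ _ g12 (supp_lin _ _ _ _ _ _)).
have [hm _] := rip (c *: u + (-1) *: v) (ex_intro2 _ _ _ g12 (supp_lin _ _ _ _ _ _)).
move: hp hm; rewrite !norm2_sq !mulmxDr -!scalemxAr !dot_exp.
rewrite /u /v (dot_restrict_disj x y dj) -/u -/v.
move=> hp hm.
have e : (-1 : R) ^+ 2 = 1 by rewrite sqrrN expr1n.
rewrite e in hm.
nra.
Qed.


Lemma supp_restrict L x : supp (restrict L x) \subset L.
Proof.
apply/subsetP => i; rewrite inE mxE; case: ifP => // _; by rewrite eqxx.
Qed.

Lemma decomp (h : 'cV[R]_n) L0 (Ls : seq {set 'I_n}) :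
  (forall i, (i < size Ls)%N -> nth set0 Ls i \subset ~: L0) ->
  (forall i j, (i < size Ls)%N -> (j < size Ls)%N -> i != j ->
        [disjoint nth set0 Ls i & nth set0 Ls j]) ->
  \bigcup_(B <- Ls) B = ~: L0 ->
  h = restrict L0 h + \sum_(0 <= j < size Ls) restrict (nth set0 Ls j) h.
Proof.
move=> sub dj cup; apply/matrixP => i c; rewrite (ord1 c) !mxE summxE big_mkord.
have [h0|h0] := boolP (i \in L0).
  rewrite big1 ?addr0 // => j _; rewrite mxE.
  have := subsetP (sub j (ltn_ord j)) i; case: (i \in _) => //.
  by move=> /(_ isT); rewrite inE h0.
have : i \in ~: L0 by rewrite inE.
rewrite -cup bigcup_seq => /bigcupP [B BL iB].
have jl : (index B Ls < size Ls)%N by rewrite index_mem.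
rewrite add0r (bigD1 (Ordinal jl)) //= mxE nth_index // iB big1 ?addr0 // => j nj.
rewrite mxE; have dj' := dj j (index B Ls) (ltn_ord j) jl nj.
by rewrite nth_index // in dj'; rewrite (disjointFl dj' iB).
Qed.

End Aux.

Unset Implicit Arguments.

Theorem lemma5p2 (R : realType) (n k m : nat) (P : {set {set 'I_n}})
    (A : 'M[R]_(m, n)) (d : R) (NA : 'cV[R]_n -> R) (f : R) :
  (0 < n)%N -> (0 < k)%N ->
  group_partition P k ->
  0 < d < 1 -> group_RIP P k A d ->
  is_norm NA -> decomposable P NA ->
  0 < f ->
  (forall (h : 'cV[R]_n) (L0 : {set 'I_n}) (Ls : seq {set 'I_n}),
      group_sparse P k L0 -> optimal_decomposition P k NA h L0 Ls ->
      \sum_(1 <= j < size Ls) norm2 (restrict (nth set0 Ls j) h)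
        <= f^-1 * NA (restrict (~: L0) h)) ->
  forall (h : 'cV[R]_n) (L0 : {set 'I_n}) (Ls : seq {set 'I_n}),
    group_sparse P k L0 -> optimal_decomposition P k NA h L0 Ls ->
    (1 <= size Ls)%N ->
    norm2 (restrict (L0 :|: nth set0 Ls 0) h)
      <= Num.sqrt 2 * d / (f * (1 - d)) * NA (restrict (~: L0) h)
         + Num.sqrt (1 + d) / (1 - d) * norm2 (A *m h).
Proof.
move=> n0 k0 gp /andP[d0 d1] rip nrm dec f0 Hf h L0 Ls g0 od s1.
have od' := od; case: od => gsL subL djL cupL _.
set L1 := nth set0 Ls 0.
have g1 : group_sparse P k L1 := gsL 0%N s1.
have dj01 : [disjoint L0 & L1] by rewrite disjoint_sym disjoints_subset subL.
set u0 := restrict L0 h; set u1 := restrict L1 h.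
set U := restrict (L0 :|: L1) h.
have eU : U = u0 + u1 by rewrite /U restrictU.
set S := \sum_(1 <= j < size Ls) norm2 (restrict (nth set0 Ls j) h).
set N := NA (restrict (~: L0) h).
set x := norm2 U; set y := norm2 (A *m h).
set a0 := norm2 u0; set a1 := norm2 u1.
have eh : h = U + \sum_(1 <= j < size Ls) restrict (nth set0 Ls j) h.
  by rewrite {1}(decomp h subL djL cupL) big_ltn // eU addrA.
have x0 : 0 <= x := norm2_ge0 _.
have y0 : 0 <= y := norm2_ge0 _.
have S0 : 0 <= S by apply: sumr_ge0 => j _; apply: norm2_ge0.
have N0 : 0 <= N by case: nrm => + _ _ _; apply.
have F6 : S <= f^-1 * N := Hf h L0 Ls g0 od'.
have gU : group_sparse P (2 * k) (L0 :|: L1) := gs_union g0 g1.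
have [F1 F1'] := rip U (ex_intro2 _ _ _ gU (supp_restrict _ _)).
have E : dot (A *m U) (A *m U) = dot (A *m U) (A *m h)
   - \sum_(1 <= j < size Ls) dot (A *m U) (A *m restrict (nth set0 Ls j) h).
  have -> : A *m h = A *m U + \sum_(1 <= j < size Ls) A *m restrict (nth set0 Ls j) h.
    by rewrite -mulmx_sumr -mulmxDr -eh.
  by rewrite dotDr dot_sumr addrK.
have nAU : norm2 (A *m U) <= Num.sqrt (1 + d) * x.
  rewrite -[norm2 (A *m U)]ger0_norm ?norm2_ge0 // -sqrtr_sqr.
  rewrite -[x]ger0_norm // -sqrtr_sqr -sqrtrM ?ler_wsqrtr //.
  by rewrite addr_ge0 // ltW.
have F3 : dot (A *m U) (A *m h) <= Num.sqrt (1 + d) * x * y.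
  apply: le_trans (cauchy _ _) _; apply: ler_wpM2r => //.
have F4 : - \sum_(1 <= j < size Ls) dot (A *m U) (A *m restrict (nth set0 Ls j) h)
          <= d * (a0 + a1) * S.
  rewrite -sumrN /S mulr_sumr; apply: ler_sum_nat => j /andP[j1 js].
  have gj := gsL j js.
  have dj0 : [disjoint L0 & nth set0 Ls j] by rewrite disjoint_sym disjoints_subset subL.
  have dj1 : [disjoint L1 & nth set0 Ls j].
    by apply: djL => //; rewrite eq_sym -lt0n.
  rewrite eU mulmxDr dotDl opprD -!dotNr -!mulmxN -restrictN.
  have r0 := rip_dot h (-h) rip (ltW d0) g0 gj dj0.
  have r1 := rip_dot h (-h) rip (ltW d0) g1 gj dj1.
  rewrite restrictN norm2N in r0 r1.
  rewrite -/u0 -/u1 -/a0 -/a1 in r0 r1.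
  rewrite mulrDr mulrDl restrictN; exact: lerD.
have F5 : a0 + a1 <= Num.sqrt 2 * x.
  have ex : x ^+ 2 = a0 ^+ 2 + a1 ^+ 2.
    rewrite /x /a0 /a1 !norm2_sq eU dotDl !dotDr.
    by rewrite /u0 /u1 (dot_restrict_disj h h dj01) dotC (dot_restrict_disj h h dj01) !addr0 add0r.
  have a00 : 0 <= a0 := norm2_ge0 _.
  have a10 : 0 <= a1 := norm2_ge0 _.
  have : (a0 + a1) ^+ 2 <= 2 * x ^+ 2 by rewrite ex; have := sqr_ge0 (a0 - a1); rewrite !expr2 => ?; nra.
  move=> /ler_wsqrtr; rewrite sqrtr_sqr sqrtrM // sqrtr_sqr !ger0_norm //.
  exact: addr_ge0.
have a00 : 0 <= a0 := norm2_ge0 _.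
have a10 : 0 <= a1 := norm2_ge0 _.
have main : (1 - d) * x ^+ 2 <= x * (Num.sqrt (1 + d) * y + d * Num.sqrt 2 * S).
  have h1 : d * (a0 + a1) * S <= d * (Num.sqrt 2 * x) * S.
    by apply: ler_wpM2r => //; apply: ler_wpM2l => //; apply: ltW.
  rewrite -norm2_sq in E.
  rewrite -/x in F1; nra.
have T0 : (1 - d) * x <= Num.sqrt (1 + d) * y + d * Num.sqrt 2 * S.
  have [xz|xp] := eqVneq x 0.
    rewrite xz mulr0; apply: addr_ge0; apply: mulr_ge0 => //;
      [exact: sqrtr_ge0 | apply: mulr_ge0; [exact: ltW | exact: sqrtr_ge0]].
  have xpos : 0 < x by rewrite lt_def xp.
  rewrite -(ler_pM2l xpos); nra.
have T1 : (1 - d) * x <= Num.sqrt (1 + d) * y + d * Num.sqrt 2 * (f^-1 * N).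
  apply: le_trans T0 _; rewrite lerD2l; apply: ler_wpM2l => //.
  apply: mulr_ge0; [exact: ltW | exact: sqrtr_ge0].
have dp : 0 < 1 - d by rewrite subr_gt0.
have -> : Num.sqrt 2 * d / (f * (1 - d)) * N + Num.sqrt (1 + d) / (1 - d) * y
  = (Num.sqrt (1 + d) * y + d * Num.sqrt 2 * (f^-1 * N)) / (1 - d).
  by field; rewrite ?(gt_eqF f0) ?(gt_eqF dp) //; apply/andP; split; rewrite gt_eqF.
by rewrite ler_pdivlMr // mulrC.
Qed.
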